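(* Let $A_1,\ldots,A_N$ be rank-deficient real matrices, each with columns of Euclidean norm $1$. Then \[ \mathrm{spark}(A_1\otimes\cdots\otimes A_N)=\min_{1\le i\le N}\mathrm{spark}(A_i). \]
   Context: $\otimes$ denotes the Kronecker product: for $A\in\mathbb{R}^{p,q}$, $B\in\mathbb{R}^{r,s}$, $A\otimes B\in\mathbb{R}^{pr,qs}$ is the block matrix with $(i,j)$ block $a_{i,j}B$. A matrix is rank-deficient if its rank is less than the minimum of its numbers of rows and columns. The spark of a matrix whose columns are linearly dependent is the smallest cardinality of a linearly dependent subset of its columns. *)

(* Defs.v *)
From HB Require Import structures.
From mathcomp Require Import all_boot all_order all_algebra.
From mathcomp Require Import mxtens.
From mathcomp Require Import all_classical all_reals.
Set Implicit Arguments. Unset Strict Implicit. Unset Printing Implicit Defensive.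
Import Order.TTheory GRing.Theory Num.Theory.
Local Open Scope ring_scope.

(* The columns of A indexed by the set S are linearly dependent
   (as an indexed family: repeated columns count as dependent). *)
Definition cols_dependent (F : fieldType) (m n : nat) (A : 'M[F]_(m, n))
    (S : {set 'I_n}) : bool :=
  ~~ free [seq col j A | j <- enum S].

(* spark A = smallest cardinality of a linearly dependent set of columns.
   (Only meaningful when the columns are dependent; the default value n.+1
   for matrices with independent columns is never used in the statement.) *)
Definition spark (F : fieldType) (m n : nat) (A : 'M[F]_(m, n)) : nat :=
  \big[minn/n.+1]_(S : {set 'I_n} | cols_dependent A S) #|S|.

Definition rank_deficient (F : fieldType) (m n : nat) (A : 'M[F]_(m, n)) : bool :=
  (\rank A < minn m n)%N.

Definition unit_columns (R : realType) (m n : nat) (A : 'M[R]_(m, n)) : Prop :=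
  forall j : 'I_n, \sum_(i < m) A i j ^+ 2 = 1.

Fixpoint prod_dim (d : nat -> nat) (N : nat) : nat :=
  match N with 0 => 1%N | k.+1 => (prod_dim d k * d k)%N end.

(* iterated Kronecker product ((1 ⊗ A_0) ⊗ A_1) ⊗ ... ⊗ A_{N-1}, using
   mxtens's tensmx (row index i*p + j, the standard Kronecker convention) *)
Fixpoint kron_iter (R : comPzRingType) (p q : nat -> nat)
    (A : forall i, 'M[R]_(p i, q i)) (N : nat)
    : 'M[R]_(prod_dim p N, prod_dim q N) :=
  match N with
  | 0 => 1%:M
  | k.+1 => kron_iter A k *t A k
  end.

(* Main.v *)
Require Import Defs.
From HB Require Import structures.
From mathcomp Require Import all_boot all_order all_algebra.
From mathcomp Require Import mxtens.
From mathcomp Require Import all_classical all_reals.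
From Stdlib Require Import Classical.
Import Order.TTheory GRing.Theory Num.Theory.
Local Open Scope ring_scope.
Set Implicit Arguments. Unset Strict Implicit. Unset Printing Implicit Defensive.

Section S.
Variable F : fieldType.

Lemma mulmx_cols m n (M : 'M[F]_(m,n)) (x : 'cV_n) :
  M *m x = \sum_j x j 0 *: col j M.
Proof.
apply/colP => i; rewrite !mxE summxE; apply: eq_bigr => j _; rewrite !mxE mulrC; congr (x _ _ * _); exact: val_inj.

Qed.

Lemma nz_entry n (x : 'cV[F]_n) : x != 0 -> exists j, x j 0 != 0.
Proof.
move=> xn0; apply/existsP; apply: contraNT xn0 => /existsPn H.
apply/eqP/colP => j; rewrite mxE; apply/eqP; have:= H j; by rewrite negbK.
Qed.

Lemma sum_cols_seq m n (M : 'M[F]_(m,n)) (S : {set 'I_n}) (j0 : 'I_n)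
   (k : 'I_n -> F) :
  \sum_(i < size [seq col j M | j <- enum S])
      k (nth j0 (enum S) i) *: [seq col j M | j <- enum S]`_i
  = \sum_(j in S) k j *: col j M.
Proof.
rewrite -(big_mkord xpredT (fun i => k (nth j0 (enum S) i) *: [seq col j M | j <- enum S]`_i)).
rewrite size_map.
rewrite (big_nat_widen _ _ _ _ _ (leqnn _)).
transitivity (\sum_(0 <= i < size (enum S)) k (nth j0 (enum S) i) *: col (nth j0 (enum S) i) M).
  rewrite !big_nat; apply: eq_bigr => i /andP[_ hi].
  by rewrite (nth_map j0).
by rewrite -(big_nth j0 xpredT (fun j => k j *: col j M)) big_enum.
Qed.


Lemma dep_from m n (M : 'M[F]_(m,n)) (S : {set 'I_n}) (x : 'cV_n) :
  x != 0 -> M *m x = 0 -> (forall j, x j 0 != 0 -> j \in S) ->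
  cols_dependent M S.
Proof.
move=> xn0 Mx supp; have [j0 xj0] := nz_entry xn0.
apply/negP => fr.
set s := [seq col j M | j <- enum S] in fr.
have /freeP H : free (in_tuple s) by [].
have Hs : \sum_(i < size s) x (nth j0 (enum S) i) 0 *: s`_i = 0.
  rewrite /s (sum_cols_seq _ _ _ (fun j => x j 0)); apply: etrans Mx; rewrite mulmx_cols.
  rewrite [RHS](bigID (mem S)) /=.
  have -> : \sum_(i < n | i \notin S) x i 0 *: col i M = 0.
    apply: big1 => j jS.
    have -> : x j 0 = 0 by apply/eqP; apply: contraNT jS => /supp.
    by rewrite scale0r.
  by rewrite addr0.
have j0S := supp _ xj0.
have hi : (index j0 (enum S) < size s)%N by rewrite size_map index_mem mem_enum.
have := H _ Hs (Ordinal hi) => /=.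
rewrite nth_index ?mem_enum // => /eqP; by rewrite (negPf xj0).
Qed.

Lemma dep_to m n (M : 'M[F]_(m,n)) (S : {set 'I_n}) :
  cols_dependent M S ->
  exists x : 'cV_n, [/\ x != 0, M *m x = 0 & forall j, x j 0 != 0 -> j \in S].
Proof.
move=> dep.
set s := [seq col j M | j <- enum S].
have H : ~ (forall k : 'I_(size s) -> F,
             \sum_(i < size s) k i *: s`_i = 0 -> forall i, k i = 0).
  by move=> H; move/negP: dep; apply; apply/(@freeP _ _ _ (in_tuple s)).
have [k Hk] := not_all_ex_not _ _ H.
have [Hsum Hne] := imply_to_and _ _ Hk.
have [i0 ki0] := not_all_ex_not _ _ Hne.
have sz : (0 < size (enum S))%N.
  by rewrite -(size_map (fun j => col j M)); exact: (leq_ltn_trans (leq0n i0) (ltn_ord i0)).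
have [j0 _] : exists j0 : 'I_n, True by move: sz; case: (enum S) => [|j t] //; exists j.
set e := enum S.
have se : size s = size e by rewrite size_map.
pose x := \sum_(i < size s) k i *: delta_mx (nth j0 e i) (0 : 'I_1).
have xE : forall j, x j 0 = \sum_(i < size s) k i * (j == nth j0 e i)%:R.
  move=> j; rewrite /x summxE; apply: eq_bigr => i _; rewrite !mxE eqxx andbT.
  by [].
exists x; split.
- have hi0 : (i0 < size e)%N by rewrite -se.
  apply/eqP => /(congr1 (fun y : 'cV_n => y (nth j0 e i0) 0)).
  rewrite xE mxE (bigD1 i0) //= eqxx mulr1 big1 ?addr0 //.
  move=> i ii0; rewrite (_ : (_ == _) = false) ?mulr0 //.
  apply/negbTE; apply: contra ii0 => /eqP /esym E.
  have hi : (i < size e)%N by rewrite -se.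
  apply/eqP/val_inj => /=.
  by apply/eqP; rewrite -(nth_uniq j0 hi hi0 (enum_uniq _)) E.
- apply: etrans Hsum; rewrite /x mulmx_sumr; apply: eq_bigr => i _.
  rewrite -scalemxAr -colE (nth_map j0) //; by rewrite -se.
- move=> j; apply: contraR => jS; rewrite xE big1 // => i _.
  rewrite (_ : (_ == _) = false) ?mulr0 //; apply/negbTE; apply: contra jS => /eqP ->.
  by rewrite -mem_enum mem_nth // -se.
Qed.

Definition supp n (x : 'cV[F]_n) := [set j | x j 0 != 0].

Definition PP m n (M : 'M[F]_(m,n)) (k : nat) :=
  exists x : 'cV_n, [/\ x != 0, M *m x = 0 & (#|supp x| <= k)%N].

Lemma spark_le m n (M : 'M[F]_(m,n)) k : PP M k -> (spark M <= k)%N.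
Proof.
move=> [x [xn0 Mx cx]].
have dep : cols_dependent M (supp x).
  by apply: (dep_from xn0 Mx) => j; rewrite inE.
apply: leq_trans cx; rewrite /spark.
rewrite unlock /=; have : supp x \in index_enum {set 'I_n} by rewrite mem_index_enum.
elim: (index_enum _) => [//|S r IH] /=; rewrite inE => /orP [/eqP <-|Hr].
  by rewrite dep geq_minl.
case: (cols_dependent M S) => //=; last exact: IH.
exact: leq_trans (geq_minr _ _) (IH Hr).
Qed.

Lemma spark_attain m n (M : 'M[F]_(m,n)) k : PP M k -> PP M (spark M).
Proof.
move=> [x [xn0 Mx cx]].
have dep : cols_dependent M (supp x).
  by apply: (dep_from xn0 Mx) => j; rewrite inE.
case: (@arg_minnP _ _ (fun S => cols_dependent M S) (fun S => #|S|) dep)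
  => Smin depS minS.
have le : (#|Smin| <= spark M)%N.
  rewrite /spark; apply: (big_ind (fun v => #|Smin| <= v)%N).
  - by apply: leq_trans (max_card _) _; rewrite card_ord.
  - by move=> a b ha hb; rewrite leq_min ha hb.
  - by move=> S; apply: minS.
have [y [yn0 My sy]] := dep_to depS.
exists y; split => //; apply: leq_trans le.
apply: subset_leq_card; apply/fintype.subsetP => j; rewrite /supp inE; apply: sy.
Qed.

Lemma tens_mul_entry m1 n1 m2 n2 (B : 'M[F]_(m1,n1)) (C : 'M[F]_(m2,n2))
  (x : 'cV_(n1 * n2)) a b :
  ((B *t C) *m x) (mxtens_index (a, b)) 0 =
  \sum_i \sum_j B a i * C b j * x (mxtens_index (i, j)) 0.
Proof.
rewrite mxE (reindex (@mxtens_index n1 n2)) /=; last first.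
  by exists (@mxtens_unindex n1 n2) => kk _; [apply: mxtens_indexK | apply: mxtens_unindexK].
rewrite pair_big /=; apply: eq_bigr => [[i j]] _ /=.
by rewrite tensmxE.
Qed.

Lemma kron_lower m1 n1 m2 n2 (B : 'M[F]_(m1,n1)) (C : 'M[F]_(m2,n2)) k :
  PP (B *t C) k -> PP B k \/ PP C k.
Proof.
move=> [x [xn0 Kx cx]].
pose X i j := x (mxtens_index (i, j)) 0.
have KE : forall a b, \sum_i \sum_j B a i * C b j * X i j = 0.
  move=> a b; rewrite -tens_mul_entry Kx; by rewrite mxE.
pose y a : 'cV_n2 := \col_j (\sum_i B a i * X i j).
have Cy : forall a, C *m y a = 0.
  move=> a; apply/colP => b; rewrite !mxE; apply: etrans (KE a b); rewrite exchange_big /=.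
  apply: eq_bigr => j _; rewrite !mxE mulr_sumr; apply: eq_bigr => i _.
  by rewrite mulrCA mulrA.
case: (boolP [exists a, y a != 0]) => [/existsP [a ya] | /existsPn ally].
  right; exists (y a); split => //.
  apply: leq_trans cx.
  apply: leq_trans (leq_imset_card (fun kk => (@mxtens_unindex n1 n2 kk).2) _).
  apply: subset_leq_card; apply/fintype.subsetP => j; rewrite /supp inE mxE => hj.
  have [i hi] : exists i, X i j != 0.
    apply/existsP; apply: contraNT hj => /existsPn H.
    by apply/eqP; apply: big1 => i _; have := H i; rewrite negbK => /eqP ->; rewrite mulr0.
  apply/imsetP; exists (mxtens_index (i, j)); first by rewrite inE.
  by rewrite mxtens_indexK.
left.
have [k0 xk0] := nz_entry xn0.
move: xk0; case: (mxtens_indexP k0) => i0 j0 xk0.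
pose z : 'cV_n1 := \col_i X i j0.
exists z; split.
- apply/eqP => /(congr1 (fun v : 'cV_n1 => v i0 0)); rewrite !mxE.
  by apply/eqP.
- apply/colP => a; have := ally a; rewrite negbK => /eqP /(congr1 (fun v : 'cV_n2 => v j0 0)).
  rewrite !mxE => H; apply: etrans H; apply: eq_bigr => i _; by rewrite mxE.
- apply: leq_trans cx.
  apply: leq_trans (leq_imset_card (fun kk => (@mxtens_unindex n1 n2 kk).1) _).
  apply: subset_leq_card; apply/fintype.subsetP => i; rewrite /supp inE mxE => hi.
  apply/imsetP; exists (mxtens_index (i, j0)); first by rewrite inE.
  by rewrite mxtens_indexK.
Qed.

Lemma kron_upl m1 n1 m2 n2 (B : 'M[F]_(m1,n1)) (C : 'M[F]_(m2,n2)) k (c : 'I_n2) :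
  PP B k -> PP (B *t C) k.
Proof.
move=> [y [yn0 By cy]].
pose x : 'cV_(n1 * n2) := \col_kk (y (@mxtens_unindex n1 n2 kk).1 0
                           * ((@mxtens_unindex n1 n2 kk).2 == c)%:R).
have xE : forall i j, x (mxtens_index (i, j)) 0 = y i 0 * (j == c)%:R.
  by move=> i j; rewrite mxE mxtens_indexK.
exists x; split.
- have [i0 yi0] := nz_entry yn0.
  apply/eqP => /(congr1 (fun v : 'cV_(n1 * n2) => v (mxtens_index (i0, c)) 0)).
  by rewrite xE eqxx mulr1 mxE; apply/eqP.
- apply/colP => kk; case: (mxtens_indexP kk) => a b.
  rewrite tens_mul_entry [RHS]mxE.
  have := congr1 (fun v : 'cV_m1 => v a 0) By; rewrite /= !mxE => H.
  transitivity (C b c * \sum_i B a i * y i 0); last by rewrite H mulr0.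
  rewrite mulr_sumr; apply: eq_bigr => i _.
  rewrite (bigD1 c) //= big1 ?addr0 => [|j jc]; last by rewrite xE (negPf jc) !mulr0.
  by rewrite xE eqxx mulr1 mulrCA mulrA.
- apply: leq_trans cy.
  apply: leq_trans (leq_imset_card (fun i => mxtens_index (i, c)) _).
  apply: subset_leq_card; apply/fintype.subsetP => kk; rewrite /supp inE.
  case: (mxtens_indexP kk) => i j; rewrite xE => hi.
  have jc : j == c by apply: contraNT hi => /negPf ->; rewrite mulr0.
  rewrite (eqP jc) eqxx mulr1 in hi.
  by apply/imsetP; exists i; [rewrite inE | rewrite (eqP jc)].
Qed.

Lemma kron_upr m1 n1 m2 n2 (B : 'M[F]_(m1,n1)) (C : 'M[F]_(m2,n2)) k (r : 'I_n1) :
  PP C k -> PP (B *t C) k.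
Proof.
move=> [y [yn0 Cy cy]].
pose x : 'cV_(n1 * n2) := \col_kk (((@mxtens_unindex n1 n2 kk).1 == r)%:R
                           * y (@mxtens_unindex n1 n2 kk).2 0).
have xE : forall i j, x (mxtens_index (i, j)) 0 = (i == r)%:R * y j 0.
  by move=> i j; rewrite mxE mxtens_indexK.
exists x; split.
- have [j0 yj0] := nz_entry yn0.
  apply/eqP => /(congr1 (fun v : 'cV_(n1 * n2) => v (mxtens_index (r, j0)) 0)).
  by rewrite xE eqxx mul1r mxE; apply/eqP.
- apply/colP => kk; case: (mxtens_indexP kk) => a b.
  rewrite tens_mul_entry [RHS]mxE.
  have := congr1 (fun v : 'cV_m2 => v b 0) Cy; rewrite /= !mxE => H.
  transitivity (B a r * \sum_j C b j * y j 0); last by rewrite H mulr0.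
  rewrite (bigD1 r) //= [X in _ + X = _]big1 ?addr0 => [|i ir]; last first.
    by apply: big1 => j _; rewrite xE (negPf ir) mul0r mulr0.
  rewrite mulr_sumr; apply: eq_bigr => j _.
  by rewrite xE eqxx mul1r mulrA.
- apply: leq_trans cy.
  apply: leq_trans (leq_imset_card (fun j => mxtens_index (r, j)) _).
  apply: subset_leq_card; apply/fintype.subsetP => kk; rewrite /supp inE.
  case: (mxtens_indexP kk) => i j; rewrite xE => hi.
  have ir : i == r by apply: contraNT hi => /negPf ->; rewrite mul0r.
  rewrite (eqP ir) eqxx mul1r in hi.
  by apply/imsetP; exists j; [rewrite inE | rewrite (eqP ir)].
Qed.

Lemma rd_PP m n (M : 'M[F]_(m,n)) : (\rank M < minn m n)%N -> PP M n.
Proof.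
move=> rk.
have kpos : (0 < \rank (kermx M^T))%N.
  rewrite mxrank_ker mxrank_tr subn_gt0; apply: leq_trans rk _; exact: geq_minr.
have Kn0 : kermx M^T != 0 by rewrite -mxrank_eq0 -lt0n.
have [i ri] : exists i, row i (kermx M^T) != 0.
  apply/existsP; apply: contraNT Kn0 => /existsPn H.
  apply/eqP/row_matrixP => i; have := H i; rewrite negbK => /eqP ->; by rewrite row0.
set u := row i (kermx M^T).
have uM : u *m M^T = 0 by apply/sub_kermxP; rewrite row_sub.
exists u^T; split.
- by apply: contra ri => /eqP H; rewrite -[row i _]trmxK -/u H trmx0.
- by rewrite -[M]trmxK -trmx_mul uM trmx0.
- by apply: leq_trans (max_card _) _; rewrite card_ord.
Qed.
End S.

Lemma prod_dim_gt0 (q : nat -> nat) N : (forall j, (j < N)%N -> (0 < q j)%N) ->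
  (0 < prod_dim q N)%N.
Proof.
elim: N => [//|N IH] H /=; rewrite muln_gt0 IH ?H //.
by move=> j hj; apply: H; apply: ltnW.
Qed.

Lemma iter_lower (R : fieldType) p q (A : forall i, 'M[R]_(p i, q i)) N k :
  PP (kron_iter A N) k -> exists2 i, (i < N)%N & PP (A i) k.
Proof.
elim: N => [|N IH] /=.
  move=> [x [xn0 Mx _]]; move: xn0; by rewrite -Mx mul1mx eqxx.
case/kron_lower => [/IH [i hi Pi] | P]; last by exists N.
by exists i => //; apply: ltnW.
Qed.

Lemma iter_upper (R : fieldType) p q (A : forall i, 'M[R]_(p i, q i)) N k i :
  (forall j, (j < N)%N -> (0 < q j)%N) -> (i < N)%N -> PP (A i) k ->
  PP (kron_iter A N) k.
Proof.
elim: N => [//|N IH] hq hi P /=.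
have hq' : forall j, (j < N)%N -> (0 < q j)%N by move=> j hj; apply: hq; apply: ltnW.
rewrite ltnS leq_eqVlt in hi; case/orP: hi => [/eqP E | hi].
  subst i; exact: (@kron_upr R _ _ _ _ (kron_iter A N) (A N) _ (Ordinal (prod_dim_gt0 hq')) P).
exact: (@kron_upl R _ _ _ _ (kron_iter A N) (A N) _ (Ordinal (hq N (ltnSn N))) (IH hq' hi P)).
Qed.

Theorem corollary3p2 (R : realType) (N : nat) (p q : nat -> nat)
    (A : forall i : nat, 'M[R]_(p i, q i)) :
  (0 < N)%N ->
  (forall i, (i < N)%N -> rank_deficient (A i)) ->
  (forall i, (i < N)%N -> unit_columns (A i)) ->
  (forall i, (i < N)%N -> (spark (kron_iter A N) <= spark (A i))%N) /\
  (exists2 i, (i < N)%N & spark (kron_iter A N) = spark (A i)).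
Proof.
move=> N0 rd _.
have hq : forall j, (j < N)%N -> (0 < q j)%N.
  move=> j hj; have := rd j hj; rewrite /rank_deficient => h.
  by apply: leq_ltn_trans (leq0n _) (leq_trans h (geq_minr _ _)).
have PA : forall i, (i < N)%N -> PP (A i) (spark (A i)).
  by move=> i hi; apply: (spark_attain (rd_PP (rd i hi))).
have up : forall i, (i < N)%N -> (spark (kron_iter A N) <= spark (A i))%N.
  by move=> i hi; apply: spark_le; apply: (iter_upper hq hi (PA i hi)).
split => //.
have PK : PP (kron_iter A N) (spark (kron_iter A N)).
  exact: spark_attain (iter_upper hq N0 (PA 0%N N0)).
have [i hi Pi] := iter_lower PK.
exists i => //; apply/eqP; rewrite eqn_leq up //=; exact: spark_le.
Qed.
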